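(* Let $A,B,C\in\mathbb{R}^2$ be three vectors of equal (nonzero) length that are not all contained in a closed half-plane bounded by a line through the origin (when their tails are placed at the origin). Then there is an ordering $(v_1,v_2,v_3)$ of $A,B,C$ such that, placed tip-to-tail, the third vector meets the first. Precisely, the segment $[v_1+v_2,\,v_1+v_2+v_3]$ intersects the segment $[0,v_1]$: either the two segments cross, or the three vectors form a closed loop ($v_1+v_2+v_3=0$). *)

(* Defs.v *)
From HB Require Import structures.
From mathcomp Require Import all_boot all_order all_algebra.
Set Implicit Arguments. Unset Strict Implicit. Unset Printing Implicit Defensive.
Import Order.TTheory GRing.Theory Num.Theory.
Local Open Scope ring_scope.

Definition dot2 {R : rcfType} (u v : 'rV[R]_2) : R :=
  u 0 0 * v 0 0 + u 0 1 * v 0 1.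
Definition len2 {R : rcfType} (u : 'rV[R]_2) : R := Num.sqrt (dot2 u u).

(* u lies in the closed half-plane {x | n . x >= 0} bounded by the line
   through the origin orthogonal to the nonzero normal n *)
Definition in_closed_halfplane {R : rcfType} (n u : 'rV[R]_2) : Prop :=
  0 <= dot2 n u.

Definition segment2 {R : rcfType} (p q : 'rV[R]_2) : 'rV[R]_2 -> Prop :=
  fun x => exists2 t : R, 0 <= t <= 1 & x = p + t *: (q - p).

Definition segments_meet {R : rcfType} (p q p' q' : 'rV[R]_2) : Prop :=
  exists x, segment2 p q x /\ segment2 p' q' x.

(* Main.v *)
Require Import Defs.
From HB Require Import structures.
From mathcomp Require Import all_boot all_order all_algebra.
From mathcomp Require Import ring lra.
Import Order.TTheory GRing.Theory Num.Theory.
Local Open Scope ring_scope.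

Lemma meet_helper (R : rcfType) (X Y Z : 'rV[R]_2) (a b c : R) :
  0 < a -> a <= b -> 0 < c -> c <= b ->
  a * X 0 0 + b * Y 0 0 + c * Z 0 0 = 0 ->
  a * X 0 1 + b * Y 0 1 + c * Z 0 1 = 0 ->
  segments_meet (X + Y) (X + Y + Z) 0 X.
Proof.
move=> a0 ab c0 cb E0 E1.
have b0 : 0 < b by apply: lt_le_trans ab.
have bne0 : b != 0 by rewrite gt_eqF.
have hy0 : Y 0 0 = - (a * X 0 0 + c * Z 0 0) / b.
  apply: (mulIf bne0); rewrite divfK //; lra.
have hy1 : Y 0 1 = - (a * X 0 1 + c * Z 0 1) / b.
  apply: (mulIf bne0); rewrite divfK //; lra.
exists ((1 - a / b) *: X); split.
- exists (c / b).
    apply/andP; split; first by rewrite divr_ge0 // ltW.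
    by rewrite ler_pdivrMr // mul1r.
  apply/rowP => j; rewrite !mxE.
  case: j => [[|[|j]] Hj] //=.
  + have -> : Ordinal Hj = 0 by apply: val_inj.
    rewrite hy0; field; exact: bne0.
  + have -> : Ordinal Hj = 1 by apply: val_inj.
    rewrite hy1; field; exact: bne0.
- exists (1 - a / b).
    have h1 : a / b <= 1 by rewrite ler_pdivrMr // mul1r.
    have h2 : 0 <= a / b by rewrite divr_ge0 // ltW.
    apply/andP; split; lra.
  by rewrite subr0 add0r.
Qed.
Arguments meet_helper {R X Y Z a b c}.

Definition perp {R : rcfType} (U : 'rV[R]_2) : 'rV[R]_2 :=
  \row_(j < 2) (if j == 0 then - U 0 1 else U 0 0).

Definition cr {R : rcfType} (U V : 'rV[R]_2) : R :=
  U 0 0 * V 0 1 - U 0 1 * V 0 0.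

Lemma dot_perp (R : rcfType) (U X : 'rV[R]_2) : dot2 (perp U) X = cr U X.
Proof. rewrite /dot2 /cr /perp !mxE /=; ring. Qed.

Lemma dot_nperp (R : rcfType) (U X : 'rV[R]_2) : dot2 (- perp U) X = - cr U X.
Proof. rewrite /dot2 /cr /perp !mxE /=; ring. Qed.

Lemma perp_neq0 (R : rcfType) (U : 'rV[R]_2) : len2 U != 0 -> perp U != 0.
Proof.
move=> hU; apply/negP => /eqP hp; move: hU; rewrite /len2 /dot2.
have h0 := congr1 (fun M : 'rV[R]_2 => M 0 0) hp.
have h1 := congr1 (fun M : 'rV[R]_2 => M 0 1) hp.
move: h0 h1; rewrite /perp !mxE /= => h0 h1.
have e1 : U 0 1 = 0 by rewrite -[U 0 1]opprK h0 oppr0.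
by rewrite h1 e1 !mulr0 addr0 sqrtr0 eqxx.
Qed.

Theorem lemma2p3 (R : rcfType) (A B C : 'rV[R]_2) :
  len2 A != 0 -> len2 A = len2 B -> len2 B = len2 C ->
  ~ (exists n : 'rV[R]_2, n != 0 /\
       in_closed_halfplane n A /\ in_closed_halfplane n B /\
       in_closed_halfplane n C) ->
  exists v1 v2 v3 : 'rV[R]_2,
    perm_eq [:: v1; v2; v3] [:: A; B; C] /\
    segments_meet (v1 + v2) (v1 + v2 + v3) 0 v1.
Proof.
move=> hA hAB hBC hH.
have hB : len2 B != 0 by rewrite -hAB.
have hC : len2 C != 0 by rewrite -hBC -hAB.
have key : forall n, n != 0 -> ~ (0 <= dot2 n A /\ 0 <= dot2 n B /\ 0 <= dot2 n C).
  by move=> n nz [h1 [h2 h3]]; apply: hH; exists n.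
have kp : forall U, len2 U != 0 ->
   ~ (0 <= cr U A /\ 0 <= cr U B /\ 0 <= cr U C) /\
   ~ (0 <= - cr U A /\ 0 <= - cr U B /\ 0 <= - cr U C).
  move=> U hU; split.
    by rewrite -!dot_perp; apply: key; apply: perp_neq0.
  by rewrite -!dot_nperp; apply: key; rewrite oppr_eq0; apply: perp_neq0.
have [kA1 kA2] := kp A hA.
have [kB1 kB2] := kp B hB.
have [kC1 kC2] := kp C hC.
set p := cr A B in kA1 kA2 kB1 kB2 kC1 kC2.
set q := cr B C in kA1 kA2 kB1 kB2 kC1 kC2.
set r := cr C A in kA1 kA2 kB1 kB2 kC1 kC2.
have eAA : cr A A = 0 by rewrite /cr; ring.
have eBB : cr B B = 0 by rewrite /cr; ring.
have eCC : cr C C = 0 by rewrite /cr; ring.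
have eBA : cr B A = - p by rewrite /p /cr; ring.
have eCB : cr C B = - q by rewrite /q /cr; ring.
have eAC : cr A C = - r by rewrite /r /cr; ring.
rewrite eAA eAC in kA1 kA2.
rewrite eBB eBA in kB1 kB2.
rewrite eCC eCB in kC1 kC2.
have I0 : q * A 0 0 + r * B 0 0 + p * C 0 0 = 0 by rewrite /p /q /r /cr; ring.
have I1 : q * A 0 1 + r * B 0 1 + p * C 0 1 = 0 by rewrite /p /q /r /cr; ring.
have hpr : (0 < p /\ 0 < r) \/ (p < 0 /\ r < 0).
  move: kA1 kA2; clear -p r; lra.
have hpq : (0 < p /\ 0 < q) \/ (p < 0 /\ q < 0).
  move: kB1 kB2; clear -p q; lra.
clear kA1 kA2 kB1 kB2 kC1 kC2 kp key.
suff main : forall a b c : R, 0 < a -> 0 < b -> 0 < c ->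
  a * A 0 0 + b * B 0 0 + c * C 0 0 = 0 ->
  a * A 0 1 + b * B 0 1 + c * C 0 1 = 0 ->
  exists v1 v2 v3 : 'rV[R]_2,
    perm_eq [:: v1; v2; v3] [:: A; B; C] /\
    segments_meet (v1 + v2) (v1 + v2 + v3) 0 v1.
  case: hpr => [[p0 r0]|[p0 r0]].
    have q0 : 0 < q by case: hpq => [[]|[]] //; lra.
    exact: (main q r p).
  have q0 : q < 0 by case: hpq => [[]|[]] //; lra.
  apply: (main (- q) (- r) (- p)); rewrite ?oppr_gt0 //.
    transitivity (- (q * A 0 0 + r * B 0 0 + p * C 0 0)); [ring | by rewrite I0 oppr0].
  transitivity (- (q * A 0 1 + r * B 0 1 + p * C 0 1)); [ring | by rewrite I1 oppr0].
clear I0 I1 hpr hpq.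
move=> a b c a0 b0 c0 E0 E1.
have [ab|ba] := lerP a b.
  have [cb|bc] := lerP c b.
    exists A, B, C; split; first by [].
    exact: (meet_helper a0 ab c0 cb E0 E1).
  exists A, C, B; split; first by apply/permP => x /=; rewrite !addn0 (addnC (x C)).
  apply: (meet_helper (b := c) (c := b) a0 (ltW (le_lt_trans ab bc)) b0 (ltW bc)).
    transitivity (a * A 0 0 + b * B 0 0 + c * C 0 0); [ring | exact: E0].
  transitivity (a * A 0 1 + b * B 0 1 + c * C 0 1); [ring | exact: E1].
have [ca|ac] := lerP c a.
  exists B, A, C; split; first by apply/permP => x /=; rewrite addnCA.
  apply: (meet_helper (a := b) (b := a) (c := c) b0 (ltW ba) c0 ca).
    transitivity (a * A 0 0 + b * B 0 0 + c * C 0 0); [ring | exact: E0].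
  transitivity (a * A 0 1 + b * B 0 1 + c * C 0 1); [ring | exact: E1].
exists A, C, B; split; first by apply/permP => x /=; rewrite !addn0 (addnC (x C)).
apply: (meet_helper (a := a) (b := c) (c := b) a0 (ltW ac) b0 (ltW (lt_trans ba ac))).
  transitivity (a * A 0 0 + b * B 0 0 + c * C 0 0); [ring | exact: E0].
transitivity (a * A 0 1 + b * B 0 1 + c * C 0 1); [ring | exact: E1].
Qed.
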